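(* Consider simultaneous two-player weighted congestion games with affine costs and uniform cost functions, where the player weights $w_1,w_2\ge 0$ (with $w_1+w_2>0$) are arbitrary. The price of anarchy (supremum over all weights and all instances, with respect to pure Nash equilibria) is equal to $1+2/\sqrt{3}\approx 2.155$, both for general congestion games and for network routing games. Moreover, for fixed weights the price of anarchy equals $1+2/\sqrt{3}$ when $w_1/w_2 = 1+\sqrt{3}$ and when $w_2/w_1 = 1+\sqrt{3}$.
   Context: A weighted two-player congestion game with affine costs consists of a finite set $R$ of resources, coefficients $\alpha_r,\beta_r \geq 0$ for each $r\in R$, two players $i=1,2$ with weights $w_i\ge 0$, and for each player $i$ a nonempty finite set $\mathcal{A}_i \subseteq 2^R$ of actions. For an action profile $A=(A_1,A_2)$ the load of $r$ is $x_r(A)=\sum_{j:\, r\in A_j} w_j$. With uniform costs, player $i$ pays $C_i(A)=\sum_{r\in A_i}(\alpha_r+\beta_r x_r(A))$. The social cost is $C(A)=C_1(A)+C_2(A)$. In a network routing game, $R$ is the arc set of a directed graph, player $i$ has a source $s_i$ and sink $t_i$, and $\mathcal{A}_i$ is the set of arc sets of directed $s_i$–$t_i$ paths. A profile $(A_1^*,A_2^* )$ is a (pure) Nash equilibrium if no player can lower her cost by unilaterally changing her action. The price of anarchy of an instance is the maximum over Nash equilibria $A$ of $C(A)/\min_{A'} C(A')$; the price of anarchy of a class is the supremum over all instances in the class (with positive optimal social cost). *)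

(* Defs.v *)
From HB Require Import structures.
From mathcomp Require Import all_boot all_order all_algebra.
From mathcomp Require Import reals.
Set Implicit Arguments. Unset Strict Implicit. Unset Printing Implicit Defensive.
Import Order.TTheory GRing.Theory Num.Theory.
Local Open Scope ring_scope.

Record cgame (R : realType) := CGame {
  cg_res : finType;
  cg_alpha : cg_res -> R;
  cg_beta : cg_res -> R;
  cg_w1 : R;
  cg_w2 : R;
  cg_acts1 : {set {set cg_res}};
  cg_acts2 : {set {set cg_res}}
}.
Arguments cg_res {R} c.
Arguments cg_alpha {R} c _.
Arguments cg_beta {R} c _.
Arguments cg_w1 {R} c.
Arguments cg_w2 {R} c.
Arguments cg_acts1 {R} c.
Arguments cg_acts2 {R} c.

Section Games.
Variable R : realType.
Variable g : cgame R.

Definition valid : Prop :=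
  (forall r, 0 <= cg_alpha g r) /\ (forall r, 0 <= cg_beta g r) /\
  0 <= cg_w1 g /\ 0 <= cg_w2 g /\ 0 < cg_w1 g + cg_w2 g /\
  cg_acts1 g != set0 /\ cg_acts2 g != set0.

Definition load (A1 A2 : {set cg_res g}) (r : cg_res g) : R :=
  (if r \in A1 then cg_w1 g else 0) + (if r \in A2 then cg_w2 g else 0).

Definition cost1 (A1 A2 : {set cg_res g}) : R :=
  \sum_(r in A1) (cg_alpha g r + cg_beta g r * load A1 A2 r).
Definition cost2 (A1 A2 : {set cg_res g}) : R :=
  \sum_(r in A2) (cg_alpha g r + cg_beta g r * load A1 A2 r).
Definition social (A1 A2 : {set cg_res g}) : R := cost1 A1 A2 + cost2 A1 A2.

Definition feasible (A1 A2 : {set cg_res g}) : Prop :=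
  A1 \in cg_acts1 g /\ A2 \in cg_acts2 g.

Definition is_NE (A1 A2 : {set cg_res g}) : Prop :=
  feasible A1 A2 /\
  (forall B1, B1 \in cg_acts1 g -> cost1 A1 A2 <= cost1 B1 A2) /\
  (forall B2, B2 \in cg_acts2 g -> cost2 A1 A2 <= cost2 A1 B2).

Definition is_opt (B1 B2 : {set cg_res g}) : Prop :=
  feasible B1 B2 /\
  (forall C1 C2, feasible C1 C2 -> social B1 B2 <= social C1 C2).
End Games.
Arguments load {R} g A1 A2 r.
Arguments cost1 {R} g A1 A2.
Arguments cost2 {R} g A1 A2.
Arguments social {R} g A1 A2.
Arguments feasible {R} g A1 A2.
Arguments is_NE {R} g A1 A2.
Arguments is_opt {R} g B1 B2.
Arguments valid {R} g.

(* Directed (multi)graph with arcs = resources: tl e -> hd e.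
   [walk tl hd u t p] : the arc sequence p is a directed walk from u to t. *)
Fixpoint walk (V T : finType) (tl hd : T -> V) (u t : V) (p : seq T) : bool :=
  match p with
  | [::] => u == t
  | e :: p' => (tl e == u) && walk tl hd (hd e) t p'
  end.

Definition is_st_path_set (V T : finType) (tl hd : T -> V) (s t : V)
    (P : {set T}) : Prop :=
  exists p : seq T, [&& walk tl hd s t p, uniq (s :: map hd p) &
                       P == [set e in p]].

Definition is_network (R : realType) (g : cgame R) : Prop :=
  exists (V : finType) (tl hd : cg_res g -> V) (s1 t1 s2 t2 : V),
    (forall P, P \in cg_acts1 g <-> is_st_path_set tl hd s1 t1 P) /\
    (forall P, P \in cg_acts2 g <-> is_st_path_set tl hd s2 t2 P).

Definition fixed_weights (R : realType) (w1 w2 : R) (g : cgame R) : Prop :=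
  cg_w1 g = w1 /\ cg_w2 g = w2.

(* The price of anarchy of the class C (sup over valid instances in C with
   positive optimal social cost, and over their pure NE) equals rho:
   rho is an upper bound and is approached arbitrarily closely. *)
Definition poa_upper (R : realType) (C : cgame R -> Prop) (rho : R) : Prop :=
  forall g : cgame R, C g -> valid g ->
  forall A1 A2 B1 B2 : {set cg_res g},
    is_NE g A1 A2 -> is_opt g B1 B2 -> 0 < social g B1 B2 ->
    social g A1 A2 <= rho * social g B1 B2.

Definition poa_lower (R : realType) (C : cgame R -> Prop) (rho : R) : Prop :=
  forall eps : R, 0 < eps ->
  exists g : cgame R, C g /\ valid g /\
  exists A1 A2 B1 B2 : {set cg_res g},
    [/\ is_NE g A1 A2, is_opt g B1 B2, 0 < social g B1 B2 &
        (rho - eps) * social g B1 B2 < social g A1 A2].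

Definition poa_eq (R : realType) (C : cgame R -> Prop) (rho : R) : Prop :=
  poa_upper C rho /\ poa_lower C rho.

(* Main.v *)
Require Import Defs.
From HB Require Import structures.
From mathcomp Require Import all_boot all_order all_algebra.
From mathcomp Require Import reals.
From mathcomp Require Import ring lra.
Import Order.TTheory GRing.Theory Num.Theory.
Local Open Scope ring_scope.

Section Key.
Variable R : realType.

Lemma key_res (a b al be rho : R) (x1 x2 y1 y2 : bool) :
  0 <= b -> b <= a -> 0 <= al -> 0 <= be -> 2 <= rho ->
  0 <= (rho - 1) * b ^+ 2 + (rho - 3) * a * b + (rho - 2) * a ^+ 2 ->
  let ld u v := (if u then a else 0) + (if v then b else 0) in
  let c1 := if x1 then al + be * ld x1 x2 else 0 in
  let c2 := if x2 then al + be * ld x1 x2 else 0 in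
  let d1 := if y1 then al + be * ld y1 x2 else 0 in
  let d2 := if y2 then al + be * ld x1 y2 else 0 in
  let s1 := if y1 then al + be * ld y1 y2 else 0 in
  let s2 := if y2 then al + be * ld y1 y2 else 0 in
  0 <= (a + b) * (rho * (s1 + s2) - (c1 + c2)) - rho * a * (d1 - c1)
        - (a + b) * (d2 - c2).
Proof.
move=> hb hab hal hbe hr hq /=.
have a0 : 0 <= a by lra.
have hr2 : 0 <= rho - 2 by lra.
have hab' : 0 <= a - b by lra.
have H1 := mulr_ge0 hbe hq.
have Ha1 := mulr_ge0 (mulr_ge0 hal a0) hr2.
have Ha2 := mulr_ge0 (mulr_ge0 hal hb) hr2.
have Ha3 := mulr_ge0 hal a0.
have Ha4 := mulr_ge0 hal hb.
have Ha5 := mulr_ge0 hal hab'.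
have Ha6 := mulr_ge0 (mulr_ge0 hal hab') hr2.
have Hb1 := mulr_ge0 (mulr_ge0 (mulr_ge0 hbe a0) a0) hr2.
have Hb2 := mulr_ge0 (mulr_ge0 (mulr_ge0 hbe a0) hb) hr2.
have Hb3 := mulr_ge0 (mulr_ge0 (mulr_ge0 hbe hb) hb) hr2.
have Hb4 := mulr_ge0 (mulr_ge0 hbe a0) hab'.
have Hb5 := mulr_ge0 (mulr_ge0 hbe hb) hab'.
have Hb6 := mulr_ge0 (mulr_ge0 hbe a0) hb.
have Hb7 := mulr_ge0 (mulr_ge0 hbe a0) a0.
have Hb8 := mulr_ge0 (mulr_ge0 hbe hb) hb.
have Hb9 := mulr_ge0 (mulr_ge0 (mulr_ge0 hbe a0) hab') hr2.
have Hb10 := mulr_ge0 (mulr_ge0 (mulr_ge0 hbe hb) hab') hr2.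
case: x1; case: x2; case: y1; case: y2 => /=; lra.
Qed.

Lemma lin_comb (T : finType) (a b rho : R) (f1 f2 f3 f4 f5 f6 : T -> R) :
  (a + b) * (rho * ((\sum_i f1 i + \sum_i f2 i)) - (\sum_i f3 i + \sum_i f4 i))
  - rho * a * (\sum_i f5 i - \sum_i f3 i) - (a + b) * (\sum_i f6 i - \sum_i f4 i)
  = \sum_i ((a + b) * (rho * (f1 i + f2 i) - (f3 i + f4 i))
            - rho * a * (f5 i - f3 i) - (a + b) * (f6 i - f4 i)).
Proof.
symmetry. do 4! rewrite ?sumrB ?big_split /= -?mulr_sumr.
ring.
Qed.

Lemma sum_in (T : finType) (A : {set T}) (F : T -> R) :
  \sum_(r in A) F r = \sum_r (if r \in A then F r else 0).
Proof. by rewrite big_mkcond. Qed.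

Definition swapg (g : cgame R) : cgame R :=
  CGame (cg_alpha g) (cg_beta g) (cg_w2 g) (cg_w1 g) (cg_acts2 g) (cg_acts1 g).

Lemma load_swap g A B r : load (swapg g) A B r = load g B A r.
Proof. by rewrite /load /= addrC. Qed.

Lemma cost1_swap g A B : cost1 (swapg g) A B = cost2 g B A.
Proof. by rewrite /cost1 /cost2; apply: eq_bigr => r _; rewrite load_swap. Qed.

Lemma cost2_swap g A B : cost2 (swapg g) A B = cost1 g B A.
Proof. by rewrite /cost1 /cost2; apply: eq_bigr => r _; rewrite load_swap. Qed.

Lemma social_swap g A B : social (swapg g) A B = social g B A.
Proof. by rewrite /social cost1_swap cost2_swap addrC. Qed.

Lemma NE_swap g A B : is_NE g B A -> is_NE (swapg g) A B.
Proof.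
move=> [[h1 h2] [h3 h4]]; split; first by split.
split=> C hC; rewrite ?cost1_swap ?cost2_swap; [exact: h4 | exact: h3].
Qed.

Lemma valid_swap g : valid g -> valid (swapg g).
Proof. by move=> [? [? [? [? [? [? ?]]]]]]; rewrite /valid /= addrC. Qed.

Lemma upper_ord (rho : R) g (A1 A2 B1 B2 : {set cg_res g}) :
  2 <= rho ->
  (forall a b : R, 0 <= (rho - 1) * b ^+ 2 + (rho - 3) * a * b + (rho - 2) * a ^+ 2) ->
  valid g -> cg_w2 g <= cg_w1 g -> is_NE g A1 A2 -> feasible g B1 B2 ->
  social g A1 A2 <= rho * social g B1 B2.
Proof.
move=> hr hq [hal [hbe [ha [hb [hab _]]]]] hba [_ [hn1 hn2]] [hB1 hB2].
have D1 := hn1 _ hB1; have D2 := hn2 _ hB2.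
set a := cg_w1 g in ha hab hba D1 D2 *; set b := cg_w2 g in hb hab hba D1 D2 *.
have key : 0 <= (a + b) * (rho * social g B1 B2 - social g A1 A2)
   - rho * a * (cost1 g B1 A2 - cost1 g A1 A2) - (a + b) * (cost2 g A1 B2 - cost2 g A1 A2).
  rewrite /social /cost1 /cost2 !sum_in lin_comb.
  apply: sumr_ge0 => r _.
  exact: (@key_res a b (cg_alpha g r) (cg_beta g r) rho (r \in A1) (r \in A2) (r \in B1) (r \in B2) hb hba (hal r) (hbe r) hr (hq a b)).
have h1 : 0 <= rho * a * (cost1 g B1 A2 - cost1 g A1 A2).
  by apply: mulr_ge0; [apply: mulr_ge0; lra | lra].
have h2 : 0 <= (a + b) * (cost2 g A1 B2 - cost2 g A1 A2).
  by apply: mulr_ge0; lra.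
have : 0 <= (a + b) * (rho * social g B1 B2 - social g A1 A2) by lra.
rewrite pmulr_rge0 //; lra.
Qed.

Lemma upper_all (rho : R) g (A1 A2 B1 B2 : {set cg_res g}) :
  2 <= rho ->
  (forall a b : R, 0 <= (rho - 1) * b ^+ 2 + (rho - 3) * a * b + (rho - 2) * a ^+ 2) ->
  valid g -> is_NE g A1 A2 -> feasible g B1 B2 ->
  social g A1 A2 <= rho * social g B1 B2.
Proof.
move=> hr hq hv hn hf.
have [hba|hab] := leP (cg_w2 g) (cg_w1 g); first exact: upper_ord.
rewrite -!(social_swap g).
apply: (@upper_ord rho (swapg g)) => //.
- exact: valid_swap.
- by rewrite /= ltW.
- by apply: NE_swap.
- by case: hf.
Qed.
End Key.
Arguments swapg {R}.
Definition T3 : finType := (bool * bool * bool)%type.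
Definition vs1 : T3 := (false, false, false).
Definition vx : T3 := (false, false, true).
Definition vy : T3 := (false, true, false).
Definition vz : T3 := (false, true, true).
Definition vt1 : T3 := (true, false, false).
Definition vi1 : T3 := (true, false, true).
Definition vi2 : T3 := (true, true, false).
Definition af1 : T3 := (false, false, false).
Definition ae1 : T3 := (false, false, true).
Definition af2 : T3 := (false, true, false).
Definition ae3 : T3 := (false, true, true).
Definition ae2 : T3 := (true, false, false).
Definition af4 : T3 := (true, false, true).

Definition tl (e : T3) : T3 :=
  match e with
  | (false, false, false) => vs1
  | (false, false, true) => vx
  | (false, true, false) => vy
  | (false, true, true) => vy
  | (true, false, false) => vx
  | (true, false, true) => vz
  | _ => vi1
  end.
Definition hd (e : T3) : T3 :=
  match e with
  | (false, false, false) => vx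
  | (false, false, true) => vy
  | (false, true, false) => vt1
  | (false, true, true) => vz
  | (true, false, false) => vz
  | (true, false, true) => vt1
  | _ => vi2
  end.

Definition P1 : seq T3 := [:: af1; ae1; af2].
Definition P2 : seq T3 := [:: af1; ae1; ae3; af4].
Definition P3 : seq T3 := [:: af1; ae2; af4].
Definition Q1 : seq T3 := [:: ae1; ae3].
Definition Q2 : seq T3 := [:: ae2].

Lemma walks1 p : walk tl hd vs1 vt1 p -> p \in [:: P1; P2; P3].
Proof.
do 6! (case: p => [|[[[] []] []] p] //=).
Qed.

Lemma walks2 p : walk tl hd vx vz p -> p \in [:: Q1; Q2].
Proof.
do 6! (case: p => [|[[[] []] []] p] //=).
Qed.

Section Game.
Variable R : realType.

Definition bet (a b : R) (e : T3) : R :=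
  match e with
  | (false, false, true) => a
  | (true, false, false) => a + b
  | (false, true, true) => (a ^+ 2 + a * b + b ^+ 2) / b
  | _ => 0
  end.

Definition sset (p : seq T3) : {set T3} := [set e in p].

Definition gm (a b : R) : cgame R :=
  @CGame R T3 (fun _ => 0) (bet a b) a b
    [set sset P1; sset P2; sset P3] [set sset Q1; sset Q2].

Lemma gm_network a b : is_network (gm a b).
Proof.
exists T3, tl, hd, vs1, vt1, vx, vz; split=> P; split.
- rewrite !inE => /orP [/orP [] |] /eqP ->.
  + by exists P1; rewrite /= eqxx.
  + by exists P2; rewrite /= eqxx.
  + by exists P3; rewrite /= eqxx.
- case=> p /and3P [hw _ /eqP ->].
  have := walks1 _ hw; rewrite !inE => /or3P [] /eqP ->; by rewrite /sset !eqxx ?orbT.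
- rewrite !inE => /orP [] /eqP ->.
  + by exists Q1; rewrite /= eqxx.
  + by exists Q2; rewrite /= eqxx.
- case=> p /and3P [hw _ /eqP ->].
  have := walks2 _ hw; rewrite !inE => /orP [] /eqP ->; by rewrite /sset !eqxx ?orbT.
Qed.

Lemma sum_sset (p : seq T3) (F : T3 -> R) : uniq p ->
  \sum_(r in sset p) F r = \sum_(r <- p) F r.
Proof. by move=> hu; rewrite big_uniq //; apply: eq_bigl => r; rewrite inE. Qed.

Lemma gm_valid a b : 0 < a -> 0 < b -> valid (gm a b).
Proof.
move=> ha hb; rewrite /valid /=; split=> //; split; last first.
  split; first exact: ltW.
  split; first exact: ltW.
  split; first lra.
  split; apply/set0Pn.
  + by exists (sset P1); rewrite !inE eqxx.
  + by exists (sset Q1); rewrite !inE eqxx.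
case=> [[[] []] []] //=; try lra.
by apply: divr_ge0; [nra | lra].
Qed.

Ltac compc := rewrite /social /cost1 /cost2 /= !sum_sset // !big_cons !big_nil /load /= !inE /=.

Lemma gm_NE a b : 0 < a -> 0 < b -> is_NE (gm a b) (sset P3) (sset Q1).
Proof.
move=> ha hb.
have hc : (a ^+ 2 + a * b + b ^+ 2) / b * b = a ^+ 2 + a * b + b ^+ 2.
  by rewrite divfK // gt_eqF.
have hc0 : 0 <= (a ^+ 2 + a * b + b ^+ 2) / b by apply: divr_ge0; nra.
split; first by split; rewrite !inE eqxx ?orbT.
split=> C; rewrite !inE.
- case/orP=> [/orP [] |] /eqP ->; compc; nra.
- case/orP=> /eqP ->; compc; nra.
Qed.

Lemma gm_opt a b : 0 < a -> 0 < b -> is_opt (gm a b) (sset P1) (sset Q2).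
Proof.
move=> ha hb.
have hc : (a ^+ 2 + a * b + b ^+ 2) / b * b = a ^+ 2 + a * b + b ^+ 2.
  by rewrite divfK // gt_eqF.
have hc0 : 0 <= (a ^+ 2 + a * b + b ^+ 2) / b by apply: divr_ge0; nra.
split; first by split; rewrite !inE eqxx ?orbT.
move=> C1 C2 [] /=; rewrite !inE.
case/orP=> [/orP [] |] /eqP -> /orP [] /eqP ->; compc; nra.
Qed.

Lemma gm_socB a b : 0 < a -> 0 < b ->
  social (gm a b) (sset P1) (sset Q2) = a ^+ 2 + a * b + b ^+ 2.
Proof. move=> ha hb; compc; ring. Qed.

Lemma gm_socA a b : 0 < a -> 0 < b ->
  social (gm a b) (sset P3) (sset Q1) = 2 * a ^+ 2 + 3 * a * b + b ^+ 2.
Proof.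
move=> ha hb.
have hc : (a ^+ 2 + a * b + b ^+ 2) / b * b = a ^+ 2 + a * b + b ^+ 2.
  by rewrite divfK // gt_eqF.
compc. lra.
Qed.
End Game.
Arguments gm {R}.
Arguments bet {R}.

Section Final.
Variable R : realType.

Lemma opt_swap (g : cgame R) A B : is_opt g B A -> is_opt (swapg g) A B.
Proof.
move=> [[h1 h2] h3]; split; first by split.
move=> C1 C2 [hc1 hc2]; rewrite !social_swap; exact: h3.
Qed.

Lemma feas_of_opt (g : cgame R) A B : is_opt g A B -> feasible g A B.
Proof. by case. Qed.

Lemma sqrt3_facts : let q : R := Num.sqrt 3 in 0 < q /\ q * q = 3.
Proof.
move=> q; split; first by rewrite sqrtr_gt0 ltr0n.
by rewrite -expr2 sqr_sqrtr // ler0n.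
Qed.

Lemma rho_facts : let q : R := Num.sqrt 3 in let rho := 1 + 2 / q in
  [/\ 2 <= rho, rho = 1 + 2 * q / 3 &
   forall a b : R, 0 <= (rho - 1) * b ^+ 2 + (rho - 3) * a * b + (rho - 2) * a ^+ 2].
Proof.
move=> q rho; have [hq0 hq2] : 0 < q /\ q * q = 3 := sqrt3_facts.
have hq32 : 3 / 2 <= q by nra.
have e : 2 / q = 2 * q / 3.
  have h30 : (3:R) != 0 by rewrite pnatr_eq0.
  have hqn : q != 0 by rewrite gt_eqF.
  apply: (mulIf hqn); rewrite mulfVK // mulrAC -(mulrA 2 q q) hq2 mulfK //.
have er : rho = 1 + 2 * q / 3 by rewrite /rho e.
split=> //; first by rewrite er; lra.
move=> a b; rewrite er.
set c := 2 * q / 3.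
have hc0 : 0 < c by rewrite /c; apply: divr_gt0; nra.
have hcc : c * c = 4 / 3.
  rewrite /c; apply/eqP; rewrite mulf_div eqr_div ?mulf_neq0 ?pnatr_eq0 //.
  apply/eqP; rewrite mulrA -[2 * q * 2]mulrC !mulrA -[_ * q * q]mulrA hq2; lra.
have h1 : c * c * a ^+ 2 = 4 / 3 * a ^+ 2 by rewrite hcc.
have h2 : 4 * c * ((1 + c - 1) * b ^+ 2 + (1 + c - 3) * a * b + (1 + c - 2) * a ^+ 2)
          = (2 * c * b + (c - 2) * a) ^+ 2 by lra.
have h3 : 0 <= 4 * c * ((1 + c - 1) * b ^+ 2 + (1 + c - 3) * a * b + (1 + c - 2) * a ^+ 2).
  by rewrite h2 sqr_ge0.
move: h3; rewrite -mulrA pmulr_rge0; last by lra.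
by rewrite pmulr_rge0.
Qed.

Lemma upper_C (C : cgame R -> Prop) : poa_upper C (1 + 2 / Num.sqrt 3).
Proof.
have [h1 _ h3] := rho_facts.
move=> g _ hv A1 A2 B1 B2 hn ho _.
exact: (@upper_all R _ g A1 A2 B1 B2 h1 h3 hv hn (proj1 ho)).
Qed.

Lemma ratio_gm (a b eps : R) : 0 < b -> a = (1 + Num.sqrt 3) * b -> 0 < eps ->
  let rho := 1 + 2 / Num.sqrt 3 in
  0 < social (gm a b) (sset P1) (sset Q2) /\
  (rho - eps) * social (gm a b) (sset P1) (sset Q2) < social (gm a b) (sset P3) (sset Q1).
Proof.
move=> hb ea he rho.
have [hq0 hq2] := sqrt3_facts.
have [_ er _] := rho_facts.
set q := Num.sqrt 3 in hq0 hq2 ea er.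
have ha : 0 < a by rewrite ea; nra.
rewrite /rho er gm_socB // gm_socA //.
have hq3 : q * q * b * b = 3 * b * b by rewrite hq2.
have hq4 : q * q * q * b * b = 3 * q * b * b by rewrite hq2.
have hs : 0 < a ^+ 2 + a * b + b ^+ 2 by nra.
split=> //.
have -> : 2 * a ^+ 2 + 3 * a * b + b ^+ 2 = (1 + 2 * q / 3) * (a ^+ 2 + a * b + b ^+ 2).
  rewrite ea; lra.
nra.
Qed.

Lemma lower_gm (C : cgame R -> Prop) :
  (forall eps : R, 0 < eps -> exists a b, [/\ 0 < b, a = (1 + Num.sqrt 3) * b & C (gm a b)]) ->
  poa_lower C (1 + 2 / Num.sqrt 3).
Proof.
move=> hC eps he.
have [a [b [hb ea hc]]] := hC eps he.
have [hq0 _] := sqrt3_facts.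
have ha : 0 < a by rewrite ea; nra.
have [h1 h2] := ratio_gm _ _ _ hb ea he.
exists (gm a b); split=> //; split; first exact: gm_valid.
by exists (sset P3), (sset Q1), (sset P1), (sset Q2); split=> //; [exact: gm_NE | exact: gm_opt].
Qed.

Lemma lower_swap (w1 w2 : R) : 0 < w1 -> w2 = (1 + Num.sqrt 3) * w1 ->
  poa_lower (fixed_weights w1 w2) (1 + 2 / Num.sqrt 3).
Proof.
move=> h1 e2 eps he.
have [hq0 _] := sqrt3_facts.
have h2 : 0 < w2 by rewrite e2; nra.
have [hs hr] := ratio_gm _ _ _ h1 e2 he.
exists (swapg (gm w2 w1)); split; first by [].
split; first exact/valid_swap/gm_valid.
exists (sset Q1), (sset P3), (sset Q2), (sset P1); rewrite !social_swap; split=> //.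
- by apply: NE_swap; exact: gm_NE.
- by apply: opt_swap; exact: gm_opt.
Qed.
End Final.

Theorem corollary1 (R : realType) :
  let rho : R := 1 + 2 / Num.sqrt 3 in
  [/\ poa_eq (fun _ : cgame R => True) rho,
      poa_eq (@is_network R) rho,
      (forall w1 w2 : R, 0 < w2 -> w1 = (1 + Num.sqrt 3) * w2 ->
         poa_eq (fixed_weights w1 w2) rho) &
      (forall w1 w2 : R, 0 < w1 -> w2 = (1 + Num.sqrt 3) * w1 ->
         poa_eq (fixed_weights w1 w2) rho)].
Proof.
move=> rho; split.
- split; first exact: upper_C.
  apply: lower_gm => eps _; exists (1 + Num.sqrt 3), 1; split=> //; by rewrite mulr1.
- split; first exact: upper_C.
  apply: lower_gm => eps _; exists (1 + Num.sqrt 3), 1; split; rewrite ?mulr1 //.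
  exact: gm_network.
- move=> w1 w2 h2 e1; split; first exact: upper_C.
  by apply: lower_gm => eps _; exists w1, w2; split.
- move=> w1 w2 h1 e2; split; first exact: upper_C.
  exact: lower_swap.
Qed.
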